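(* Suppose that for each $J\subseteq[n]$, $\mathcal B_n(J)$ is a set of homogeneous polynomials in $\mathbb C[\mathbf x_n]$ whose images form a basis of $\mathbb C[\mathbf x_n]/(I^B_n:f_J)$. Then the images in $SR^B_n$ of the elements of $\mathcal B_n=\bigsqcup_{J\subseteq[n]}\mathcal B_n(J)\cdot\theta_J$ are linearly independent.
   Context: $\mathbb C[\mathbf x_n]=\mathbb C[x_1,\dots,x_n]$; $\Omega_n=\mathbb C[\mathbf x_n]\otimes\wedge\{\theta_1,\dots,\theta_n\}$ with anticommuting $\theta_i$ commuting with the $x_j$; $\theta_J=\theta_{j_1}\cdots\theta_{j_k}$ for $J=\{j_1<\dots<j_k\}$. $\mathfrak B_n$ (signed permutations) acts by $\pi(x_i)=x_{\pi(i)}$, $\pi(\theta_i)=\theta_{\pi(i)}$, $x_{-i}=-x_i$, $\theta_{-i}=-\theta_i$. $SI^B_n$ is the ideal of $\Omega_n$ generated by the invariants with zero constant term, $SR^B_n=\Omega_n/SI^B_n$; $I^B_n$ is the ideal of $\mathbb C[\mathbf x_n]$ generated by invariant polynomials with zero constant term. $(I:f)=\{g:fg\in I\}$. $f_J=\prod_{j\in J}x_j\prod_{j<i\le n}(x_j^2-x_i^2)$. *)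

(* Defs.v *)
(* multinomials' mpoly for C[x_1..x_n]; C is modelled as R[i]
   (complex numbers over a realType R, i.e. the complex field). *)
From HB Require Import structures.
From mathcomp Require Import all_boot all_order all_algebra all_fingroup.
From mathcomp Require Import reals complex.
From mathcomp Require Import mpoly.
Set Implicit Arguments. Unset Strict Implicit. Unset Printing Implicit Defensive.
Import GRing.Theory.
Local Open Scope ring_scope.

(* Signed permutations of [n] (0-based: 'I_n stands for {1,...,n}):
   a pair (sigma, eps) acting by  i |-> (-1)^(eps i) * sigma(i). *)
Definition signed_perm (n : nat) := ('S_n * {ffun 'I_n -> bool})%type.

Definition sgn_of (K : fieldType) (b : bool) : K := (-1) ^+ b.

(* image of the variables x_i under pi : pi(x_i) = x_{pi(i)}, x_{-i} = - x_i *)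
Definition spx (K : fieldType) (n : nat) (pi : signed_perm n)
  : n.-tuple {mpoly K[n]} :=
  [tuple (sgn_of K (pi.2 i)) *: 'X_(pi.1 i) | i < n].

Definition pact (K : fieldType) (n : nat) (pi : signed_perm n)
  (p : {mpoly K[n]}) : {mpoly K[n]} := p \mPo spx K pi.

Definition poly_invariant (K : fieldType) (n : nat) (p : {mpoly K[n]}) :=
  forall pi : signed_perm n, pact pi p = p.

Definition IB (K : fieldType) (n : nat) (p : {mpoly K[n]}) : Prop :=
  exists s : seq ({mpoly K[n]} * {mpoly K[n]}),
    (forall t, t \in s -> poly_invariant t.2 /\ t.2@_0%MM = 0) /\
    p = \sum_(t <- s) t.1 * t.2.

Definition colon (K : fieldType) (n : nat) (I : {mpoly K[n]} -> Prop)
  (f g : {mpoly K[n]}) : Prop := I (f * g).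

Definition fJ (K : fieldType) (n : nat) (J : {set 'I_n}) : {mpoly K[n]} :=
  \prod_(j in J) ('X_j * \prod_(i : 'I_n | (j < i)%N) ('X_j ^+ 2 - 'X_i ^+ 2)).

(* Superspace ring Omega_n = C[x_n] (x) wedge{theta_1..theta_n}, represented by
   the coordinates F J (the coefficient polynomial of theta_J). *)
Definition Omega (K : fieldType) (n : nat) := {ffun {set 'I_n} -> {mpoly K[n]}}.

Definition omono (K : fieldType) (n : nat) (J : {set 'I_n}) (p : {mpoly K[n]})
  : Omega K n := [ffun L => if L == J then p else 0].

(* sign of theta_I * theta_J = osgn I J * theta_(I u J)  (I, J disjoint) *)
Definition osgn (K : fieldType) (n : nat) (I J : {set 'I_n}) : K :=
  (-1) ^+ #|[set p : 'I_n * 'I_n | [&& p.1 \in I, p.2 \in J & (p.2 < p.1)%N]]|.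

Definition omul (K : fieldType) (n : nat) (F G : Omega K n) : Omega K n :=
  [ffun L => \sum_(I : {set 'I_n}) \sum_(J : {set 'I_n} |
                [disjoint I & J] && (I :|: J == L)) osgn K I J *: (F I * G J)].

Definition oone (K : fieldType) (n : nat) : Omega K n := omono set0 1.

Definition theta (K : fieldType) (n : nat) (i : 'I_n) : Omega K n :=
  omono [set i] 1.

Definition oact (K : fieldType) (n : nat) (pi : signed_perm n) (F : Omega K n)
  : Omega K n :=
  \sum_(J : {set 'I_n})
     omul (omono set0 (pact pi (F J)))
          (foldr (@omul K n) (oone K n)
             [seq sgn_of K (pi.2 j) *: theta K (pi.1 j) | j <- enum J]).

Definition omega_invariant (K : fieldType) (n : nat) (F : Omega K n) :=
  forall pi : signed_perm n, oact pi F = F.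

Definition SIB (K : fieldType) (n : nat) (F : Omega K n) : Prop :=
  exists s : seq (Omega K n * Omega K n * Omega K n),
    (forall t, t \in s -> omega_invariant t.1.2 /\ (t.1.2 set0)@_0%MM = 0) /\
    F = \sum_(t <- s) omul (omul t.1.1 t.1.2) t.2.

(* the images of the elements of the set B form a basis of C[x_n]/Q, where Q is
   a subspace (given by its membership predicate) *)
Definition quot_basis (K : fieldType) (n : nat) (Q B : {mpoly K[n]} -> Prop)
  : Prop :=
  (forall (s : seq {mpoly K[n]}) (c : {mpoly K[n]} -> K),
     uniq s -> (forall p, p \in s -> B p) ->
     Q (\sum_(p <- s) c p *: p) -> forall p, p \in s -> c p = 0) /\
  (forall q : {mpoly K[n]}, exists (s : seq {mpoly K[n]}) (c : {mpoly K[n]} -> K),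
     (forall p, p \in s -> B p) /\ Q (q - \sum_(p <- s) c p *: p)).

(* Main.v *)
Require Import Defs.
From HB Require Import structures.
From mathcomp Require Import all_boot all_order all_algebra all_fingroup.
From mathcomp Require Import reals complex.
From mathcomp Require Import mpoly.
From mathcomp Require Import zify.
Set Implicit Arguments. Unset Strict Implicit. Unset Printing Implicit Defensive.
Import GRing.Theory Num.Theory.
Local Open Scope ring_scope.

Section OmegaAlg.
Variable K : numFieldType.
Variable n : nat.
Notation Om := (Omega K n).
Notation MP := {mpoly K[n]}.

Lemma omonoE (J : {set 'I_n}) (p : MP) L : omono J p L = if L == J then p else 0.
Proof. by rewrite ffunE. Qed.

Lemma omulE (F G : Om) L : omul F G L = \sum_(I : {set 'I_n}) \sum_(J : {set 'I_n} |
                [disjoint I & J] && (I :|: J == L)) osgn K I J *: (F I * G J).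
Proof. by rewrite ffunE. Qed.

Lemma omulDl (F1 F2 G : Om) : omul (F1 + F2) G = omul F1 G + omul F2 G.
Proof.
apply/ffunP=> L; rewrite !ffunE -big_split; apply: eq_bigr => I _.
rewrite -big_split; apply: eq_bigr => J _; by rewrite ffunE mulrDl scalerDr.
Qed.

Lemma omulDr (F G1 G2 : Om) : omul F (G1 + G2) = omul F G1 + omul F G2.
Proof.
apply/ffunP=> L; rewrite !ffunE -big_split; apply: eq_bigr => I _.
rewrite -big_split; apply: eq_bigr => J _; by rewrite ffunE mulrDr scalerDr.
Qed.

Lemma omul0l (G : Om) : omul 0 G = 0.
Proof.
apply/ffunP=> L; rewrite !ffunE big1 // => I _; rewrite big1 // => J _.
by rewrite ffunE mul0r scaler0.
Qed.

Lemma omul0r (G : Om) : omul G 0 = 0.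
Proof.
apply/ffunP=> L; rewrite !ffunE big1 // => I _; rewrite big1 // => J _.
by rewrite ffunE mulr0 scaler0.
Qed.

Lemma omulZl c (F G : Om) : omul (c *: F) G = c *: omul F G.
Proof.
apply/ffunP=> L; rewrite !ffunE scaler_sumr; apply: eq_bigr => I _.
rewrite scaler_sumr; apply: eq_bigr => J _.
by rewrite ffunE -scalerAl !scalerA mulrC.
Qed.

Lemma omulZr c (F G : Om) : omul F (c *: G) = c *: omul F G.
Proof.
apply/ffunP=> L; rewrite !ffunE scaler_sumr; apply: eq_bigr => I _.
rewrite scaler_sumr; apply: eq_bigr => J _.
by rewrite ffunE -scalerAr !scalerA mulrC.
Qed.

Lemma omulNl (F G : Om) : omul (- F) G = - omul F G.
Proof. by rewrite -scaleN1r omulZl scaleN1r. Qed.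

Lemma omulNr (F G : Om) : omul F (- G) = - omul F G.
Proof. by rewrite -scaleN1r omulZr scaleN1r. Qed.

Lemma omul_suml I (r : seq I) (P : pred I) (F : I -> Om) (G : Om) :
  omul (\sum_(i <- r | P i) F i) G = \sum_(i <- r | P i) omul (F i) G.
Proof. by apply: (big_morph (fun X => omul X G)) => [X Y|]; rewrite ?omulDl ?omul0l. Qed.

Lemma omul_sumr I (r : seq I) (P : pred I) (F : I -> Om) (G : Om) :
  omul G (\sum_(i <- r | P i) F i) = \sum_(i <- r | P i) omul G (F i).
Proof. by apply: (big_morph (fun X => omul G X)) => [X Y|]; rewrite ?omulDr ?omul0r. Qed.

Lemma omonoD J (p q : MP) : omono J (p + q) = omono J p + omono J q.
Proof. by apply/ffunP=> L; rewrite !ffunE; case: eqP; rewrite ?addr0. Qed.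

Lemma omono0 J : omono J (0 : MP) = 0.
Proof. by apply/ffunP=> L; rewrite !ffunE; case: eqP. Qed.

Lemma omonoZ J c (p : MP) : omono J (c *: p) = c *: omono J p.
Proof. by apply/ffunP=> L; rewrite !ffunE; case: eqP; rewrite ?scaler0. Qed.

Lemma omono_sum J I (r : seq I) (P : pred I) (F : I -> MP) :
  omono J (\sum_(i <- r | P i) F i) = \sum_(i <- r | P i) omono J (F i).
Proof. by apply: (big_morph (omono J)) => [X Y|]; rewrite ?omonoD ?omono0. Qed.

Lemma odecomp (F : Om) : F = \sum_(I : {set 'I_n}) omono I (F I).
Proof.
apply/ffunP=> L; rewrite sum_ffunE (bigD1 L) //= big1 ?addr0.
  by rewrite omonoE eqxx.
by move=> I /negbTE nIL; rewrite omonoE eq_sym nIL.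
Qed.

Lemma omono_mul I J (a b : MP) :
  omul (omono I a) (omono J b) =
  if [disjoint I & J] then osgn K I J *: omono (I :|: J) (a * b) else 0.
Proof.
apply/ffunP=> L; rewrite omulE (bigD1 I) //= [X in _ + X]big1 ?addr0; last first.
  move=> I' nI'; rewrite big1 // => J' _.
  by rewrite omonoE (negbTE nI') mul0r scaler0.
rewrite big_mkcond /= (bigD1 J) //= [X in _ + X]big1 ?addr0; last first.
  move=> J' nJ'; rewrite [omono J b J']omonoE (negbTE nJ') mulr0 scaler0; by case: ifP.
rewrite !omonoE !eqxx.
case dIJ: [disjoint I & J] => /=; last by rewrite ffunE.
rewrite ffunE omonoE eq_sym; by case: eqP; rewrite ?scaler0.
Qed.

Definition inv (I J : {set 'I_n}) :=
  #|[set p : 'I_n * 'I_n | [&& p.1 \in I, p.2 \in J & (p.2 < p.1)%N]]|.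

Lemma osgnE (I J : {set 'I_n}) : osgn K I J = (-1) ^+ inv I J.
Proof. by []. Qed.

Lemma inv0l (J : {set 'I_n}) : inv set0 J = 0%N.
Proof. rewrite /inv; apply/eqP; rewrite cards_eq0; apply/eqP/setP => p; by rewrite !inE. Qed.

Lemma inv0r (J : {set 'I_n}) : inv J set0 = 0%N.
Proof. rewrite /inv; apply/eqP; rewrite cards_eq0; apply/eqP/setP => p; by rewrite !inE andbF. Qed.

Lemma osgn0l (J : {set 'I_n}) : osgn K set0 J = 1.
Proof. by rewrite osgnE inv0l expr0. Qed.

Lemma osgn0r (J : {set 'I_n}) : osgn K J set0 = 1.
Proof. by rewrite osgnE inv0r expr0. Qed.

Lemma dis0l (A : {set 'I_n}) : [disjoint set0 & A].
Proof. by rewrite -setI_eq0 set0I. Qed.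
Lemma dis0r (A : {set 'I_n}) : [disjoint A & set0].
Proof. by rewrite -setI_eq0 setI0. Qed.
Lemma disUl (A B C : {set 'I_n}) : [disjoint A :|: B & C] = [disjoint A & C] && [disjoint B & C].
Proof. by rewrite -!setI_eq0 setIUl setU_eq0. Qed.
Lemma disUr (A B C : {set 'I_n}) : [disjoint A & B :|: C] = [disjoint A & B] && [disjoint A & C].
Proof. by rewrite -!setI_eq0 setIUr setU_eq0. Qed.

Lemma cardsUd (T : finType) (A B : {set T}) : [disjoint A & B] -> #|A :|: B| = (#|A| + #|B|)%N.
Proof. by move=> d; rewrite -cardsUI (disjoint_setI0 d) cards0 addn0. Qed.

Lemma omul_polyl (p : MP) (F : Om) : omul (omono set0 p) F = [ffun L => p * F L].
Proof.
rewrite [F in LHS]odecomp omul_sumr.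
apply/ffunP => L; rewrite sum_ffunE ffunE (bigD1 L) //= big1 ?addr0.
  by rewrite omono_mul dis0l set0U ffunE omonoE eqxx osgn0l scale1r.
move=> I nIL; rewrite omono_mul dis0l set0U ffunE omonoE.
by rewrite eq_sym (negbTE nIL) scaler0.
Qed.

Lemma omul_polyr (p : MP) (F : Om) : omul F (omono set0 p) = [ffun L => F L * p].
Proof.
rewrite [F in LHS]odecomp omul_suml.
apply/ffunP => L; rewrite sum_ffunE ffunE (bigD1 L) //= big1 ?addr0.
  by rewrite omono_mul dis0r setU0 ffunE omonoE eqxx osgn0r scale1r.
move=> I nIL; rewrite omono_mul dis0r setU0 ffunE omonoE.
by rewrite eq_sym (negbTE nIL) scaler0.
Qed.

Lemma omul_poly_comm (p : MP) (F : Om) : omul (omono set0 p) F = omul F (omono set0 p).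
Proof. by rewrite omul_polyl omul_polyr; apply/ffunP => L; rewrite !ffunE mulrC. Qed.

Lemma omul1l (F : Om) : omul (oone K n) F = F.
Proof. by rewrite /oone omul_polyl; apply/ffunP => L; rewrite ffunE mul1r. Qed.

Lemma omul1r (F : Om) : omul F (oone K n) = F.
Proof. by rewrite /oone omul_polyr; apply/ffunP => L; rewrite ffunE mulr1. Qed.

Lemma invUl (I J L : {set 'I_n}) : [disjoint I & J] -> inv (I :|: J) L = (inv I L + inv J L)%N.
Proof.
move=> dIJ; rewrite /inv -cardsUd; last first.
  rewrite -setI_eq0; apply/eqP/setP => p; rewrite !inE; apply/negbTE/negP.
  move=> /andP[/and3P[p1I _ _] /and3P[p1J _ _]].
  move: dIJ; rewrite -setI_eq0 => /eqP H.
  by move: (congr1 (fun S : {set 'I_n} => p.1 \in S) H); rewrite /= !inE p1I p1J.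
apply: eq_card => p; rewrite !inE; by case: (p.1 \in I); case: (p.1 \in J); rewrite /= ?andbF ?orbb ?orbF ?orFb.
Qed.

Lemma invUr (I J L : {set 'I_n}) : [disjoint J & L] -> inv I (J :|: L) = (inv I J + inv I L)%N.
Proof.
move=> dJL; rewrite /inv -cardsUd; last first.
  rewrite -setI_eq0; apply/eqP/setP => p; rewrite !inE; apply/negbTE/negP.
  move=> /andP[/and3P[_ p2J _] /and3P[_ p2L _]].
  move: dJL; rewrite -setI_eq0 => /eqP H.
  by move: (congr1 (fun S : {set 'I_n} => p.2 \in S) H); rewrite /= !inE p2J p2L.
apply: eq_card => p; rewrite !inE; by case: (p.2 \in J); case: (p.2 \in L); rewrite /= ?andbF ?orbb ?orbF ?orFb.
Qed.

Lemma osgn_cocycle (I J L : {set 'I_n}) : [disjoint I & J] -> [disjoint J & L] -> [disjoint I & L] ->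
  osgn K I J * osgn K (I :|: J) L = osgn K J L * osgn K I (J :|: L).
Proof.
move=> dIJ dJL dIL; rewrite !osgnE invUl // invUr // -!exprD; congr (_ ^+ _).
lia.
Qed.

Lemma omul_sum2 I1 I2 (r1 : seq I1) (r2 : seq I2) (f : I1 -> Om) (g : I2 -> Om) :
  omul (\sum_(i <- r1) f i) (\sum_(j <- r2) g j) = \sum_(i <- r1) \sum_(j <- r2) omul (f i) (g j).
Proof. rewrite omul_suml; apply: eq_bigr => i _; by rewrite omul_sumr. Qed.

Lemma omulA_mono I J L (a b c : MP) :
  omul (omul (omono I a) (omono J b)) (omono L c) = omul (omono I a) (omul (omono J b) (omono L c)).
Proof.
rewrite !omono_mul.
case dIJ: [disjoint I & J]; case dJL: [disjoint J & L] => /=;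
  rewrite ?omul0l ?omul0r ?omulZl ?omulZr ?omono_mul //.
- rewrite disUl dJL disUr dIJ andbT /=.
  case dIL: [disjoint I & L] => /=; rewrite ?scaler0 //.
  by rewrite !scalerA osgn_cocycle // setUA mulrA.
- by rewrite disUl dJL andbF scaler0.
- by rewrite disUr dIJ scaler0.
Qed.

Lemma omulA (F G H : Om) : omul (omul F G) H = omul F (omul G H).
Proof.
have -> : omul (omul F G) H = omul (omul (\sum_I omono I (F I)) (\sum_J omono J (G J)))
   (\sum_L omono L (H L)) by rewrite -!odecomp.
have -> : omul F (omul G H) = omul (\sum_I omono I (F I)) (omul (\sum_J omono J (G J))
   (\sum_L omono L (H L))) by rewrite -!odecomp.
rewrite [in LHS]omul_sum2 [in LHS]omul_sum2 [in RHS]omul_sum2 [in RHS]omul_sum2.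
apply: eq_bigr => I _.
under eq_bigr => L _ do rewrite omul_suml.
rewrite exchange_big /=; apply: eq_bigr => J _.
rewrite omul_sumr; apply: eq_bigr => L _.
exact: omulA_mono.
Qed.

Definition lin (a : 'I_n -> MP) : Om := \sum_m omono [set m] (a m).

Lemma inv11 (m m' : 'I_n) : inv [set m] [set m'] = (m' < m)%N.
Proof.
rewrite /inv; case: ltnP => h.
  have -> : [set p : 'I_n * 'I_n | [&& p.1 \in [set m], p.2 \in [set m'] & (p.2 < p.1)%N]]
     = [set (m, m')].
    apply/setP => -[x y]; rewrite !inE /= xpair_eqE.
    by case: (x =P m) => [ex|nx]; case: (y =P m') => [ey|ny] //=; subst; rewrite ?h.
  by rewrite cards1.
apply/eqP; rewrite cards_eq0; apply/eqP/setP => -[x y]; rewrite !inE /=.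
by case: (x =P m) => [ex|nx]; case: (y =P m') => [ey|ny] //=; subst; rewrite ltnNge h.
Qed.

Lemma osgn11 (m m' : 'I_n) : osgn K [set m] [set m'] = (-1) ^+ (m' < m)%N.
Proof. by rewrite osgnE inv11. Qed.

Lemma lin_anti a b : omul (lin a) (lin b) = - omul (lin b) (lin a).
Proof.
rewrite /lin !omul_sum2 [in RHS]exchange_big -sumrN; apply: eq_bigr => m _.
rewrite -sumrN; apply: eq_bigr => m' _.
rewrite !omono_mul !disjoints1 !in_set1 (eq_sym m').
case: eqP => [->|nm] /=; first by rewrite oppr0.
rewrite !osgn11 setUC mulrC.
case: (ltngtP m' m) => h; rewrite ?expr1 ?expr0 ?scaleN1r ?scale1r ?opprK //.
by case: nm; apply: val_inj.
Qed.

Lemma lin_sq a : omul (lin a) (lin a) = 0.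
Proof.
have h := lin_anti a a.
have h2 : (2 : K) *: omul (lin a) (lin a) = 0.
  by rewrite scaler_nat mulr2n {1}h addNr.
have : (2 : K) != 0 by rewrite pnatr_eq0.
move=> nz; move/eqP: h2; rewrite scaler_eq0 (negbTE nz) /=; by move/eqP.
Qed.

Definition prodl (eta : 'I_n -> Om) (l : seq 'I_n) : Om :=
  foldr (@omul K n) (oone K n) (map eta l).

Lemma prodl_cons eta x l : prodl eta (x :: l) = omul (eta x) (prodl eta l).
Proof. by []. Qed.

Definition ltO (a b : 'I_n) := (a < b)%N.

Lemma sorted_min x (l : seq 'I_n) : sorted ltO (x :: l) -> forall y, y \in l -> (x < y)%N.
Proof.
move=> h y yl; have tr : transitive ltO by move=> a b c; exact: ltn_trans.
have := order_path_min tr h.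
rewrite -/(ltO x) => /allP /(_ y yl); by [].
Qed.

Section Lin.
Variable A : 'I_n -> 'I_n -> MP.
Variable eta : 'I_n -> Om.
Hypothesis etaE : forall i, eta i = lin (A i).

Lemma eta_anti i j X : omul (eta i) (omul (eta j) X) = - omul (eta j) (omul (eta i) X).
Proof. by rewrite -!omulA !etaE lin_anti omulNl. Qed.

Lemma eta_sq i X : omul (eta i) (omul (eta i) X) = 0.
Proof. by rewrite -omulA etaE lin_sq omul0l. Qed.

Lemma eta_prod_in (l : seq 'I_n) (J : {set 'I_n}) i :
  sorted ltO l -> i \in l -> i \in J ->
  omul (eta i) (prodl eta [seq x <- l | x \in J]) = 0.
Proof.
elim: l => [//|x l IH] sl; rewrite inE => il iJ /=.
have sl' : sorted ltO l by move: sl => /= /path_sorted.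
case xJ: (x \in J).
  rewrite prodl_cons; case: (i =P x) => [->|nix]; first exact: eta_sq.
  move: il; rewrite (introF eqP nix) /= => il.
  by rewrite eta_anti IH // omul0r oppr0.
case: (i =P x) il => [eix|nix] /= il; first by move: xJ; rewrite -eix iJ.
exact: IH.
Qed.

Lemma eta_prod_notin (l : seq 'I_n) (J : {set 'I_n}) i :
  sorted ltO l -> i \in l -> i \notin J ->
  omul (eta i) (prodl eta [seq x <- l | x \in J]) =
  (-1) ^+ (count (fun j => (j \in J) && (j < i)%N) l) *: prodl eta [seq x <- l | x \in i |: J].
Proof.
elim: l => [//|x l IH] sl; rewrite inE => il iJ /=.
have sl' : sorted ltO l by move: sl => /= /path_sorted.
have xmin := sorted_min sl.
rewrite in_setU1.
case xJ: (x \in J).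
  case: (i =P x) il => [eix|nix] /= il; first by move: iJ; rewrite eix xJ.
  rewrite orbT !prodl_cons eta_anti IH // omulZr.
  have xi : (x < i)%N by apply: xmin.
  by rewrite xi /= exprS mulN1r scaleNr.
case: (x =P i) il => [exi|nxi] /= il.
  rewrite !prodl_cons exi.
  have inl : i \notin l.
    apply/negP => /xmin; by rewrite exi ltnn.
  have -> : [seq x0 <- l | x0 \in i |: J] = [seq x0 <- l | x0 \in J].
    apply: eq_in_filter => y yl; rewrite in_setU1; case: (y =P i) => [eyi|] //=.
    by move: inl; rewrite -eyi yl.
  have -> : count (fun j => (j \in J) && (j < i)%N) l = 0%N.
    apply/eqP; rewrite -leqn0 leqNgt -has_count; apply/hasP => -[y yl /andP[_ yi]].
    by move: (xmin y yl); rewrite exi ltnNge ltnW.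
  by rewrite add0n expr0 scale1r.
move: il; rewrite (introF eqP (nesym nxi)) /= => il.
rewrite ?xJ /= ?add0n; exact: IH.
Qed.

End Lin.

Lemma theta_lin i : theta K i = lin (fun m => if m == i then 1 else 0).
Proof.
rewrite /lin (bigD1 i) //= big1 ?addr0 ?eqxx //.
by move=> m /negbTE ->; rewrite omono0.
Qed.

Lemma omono_prodl (l : seq 'I_n) (L : {set 'I_n}) :
  sorted ltO l -> {subset L <= l} ->
  omono L 1 = prodl (@theta K n) [seq x <- l | x \in L].
Proof.
elim: l L => [|x l IH] L sl sub /=.
  have -> : L = set0.
    by apply/setP => y; rewrite inE; apply/negbTE/negP => /sub.
  by [].
have sl' : sorted ltO l by move: sl => /= /path_sorted.
have xmin := sorted_min sl.
case xL: (x \in L).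
  have -> : [seq x0 <- l | x0 \in L] = [seq x0 <- l | x0 \in L :\ x].
    apply: eq_in_filter => y yl; rewrite in_setD1.
    by case: (y =P x) => [eyx|] //=; move: (xmin y yl); rewrite eyx ltnn.
  rewrite prodl_cons -IH //; last first.
    move=> y; rewrite in_setD1 => /andP[nyx /sub]; rewrite inE (negbTE nyx) //.
  rewrite /theta omono_mul disjoints1 in_setD1 eqxx /= mulr1 setD1K //.
  rewrite osgnE.
  have -> : inv [set x] (L :\ x) = 0%N.
    apply/eqP; rewrite cards_eq0; apply/eqP/setP => -[u v]; rewrite !inE /=.
    case: (u =P x) => [->|] //=; case: (v =P x) => [->|nvx] //=.
    case vL: (v \in L) => //=; apply/negbTE; rewrite -leqNgt; apply: ltnW.
    have : v \in x :: l by apply: sub.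
    by rewrite inE (introF eqP nvx) /= => /xmin.
  by rewrite expr0 scale1r.
apply: IH => // y yL; have := sub y yL; rewrite inE.
by case: (y =P x) => [eyx|] //=; move: xL; rewrite -eyx yL.
Qed.

Lemma enumJ (J : {set 'I_n}) : enum J = [seq x <- enum 'I_n | x \in J].
Proof. rewrite {1}/enum_mem. rewrite enumT /enum_mem. apply eq_filter => x; by []. Qed.

Lemma sorted_enum : sorted ltO (enum 'I_n).
Proof. have := iota_ltn_sorted 0 n. rewrite -val_enum_ord sorted_map. done. Qed.

Lemma card_count (P : pred 'I_n) : #|[set j | P j]| = count P (enum 'I_n).
Proof.
rewrite cardE enumJ size_filter; apply: eq_count => x; by rewrite inE.
Qed.

Lemma osgn1_count (m : 'I_n) (J : {set 'I_n}) :
  osgn K [set m] J = (-1) ^+ count (fun j => (j \in J) && (j < m)%N) (enum 'I_n).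
Proof.
rewrite osgnE /inv -card_count.
have -> : [set p : 'I_n * 'I_n | [&& p.1 \in [set m], p.2 \in J & (p.2 < p.1)%N]]
   = [set (m, j) | j in [set j | (j \in J) && (j < m)%N]].
  apply/setP => -[x y]; rewrite !inE /=.
  apply/idP/imsetP => [/and3P[/eqP -> yJ ym]|[z]]; first by exists y; rewrite // inE yJ ym.
  by rewrite inE => /andP[zJ zm] [-> ->]; rewrite eqxx zJ zm.
by rewrite card_imset // => x y [].
Qed.

Lemma omono_poly_mul (a b : MP) : omul (omono set0 a) (omono set0 b) = omono set0 (a * b).
Proof. by rewrite omono_mul dis0l osgn0l scale1r set0U. Qed.

Lemma omono_prod (L : {set 'I_n}) (p : MP) :
  omono L p = omul (omono set0 p) (prodl (@theta K n) (enum L)).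
Proof.
rewrite enumJ -omono_prodl //; last by move=> x; rewrite mem_enum.
  by rewrite omul_polyl; apply/ffunP => J; rewrite !ffunE; case: eqP; rewrite ?mulr1 ?mulr0.
exact: sorted_enum.
Qed.

Section Psi.
Variable sigma : MP -> MP.
Hypothesis sD : forall p q, sigma (p + q) = sigma p + sigma q.
Hypothesis sM : forall p q, sigma (p * q) = sigma p * sigma q.
Hypothesis s1 : sigma 1 = 1.
Hypothesis sZ : forall (c : K) p, sigma (c *: p) = c *: sigma p.
Variable A : 'I_n -> 'I_n -> MP.
Variable eta : 'I_n -> Om.
Hypothesis etaE : forall i, eta i = lin (A i).

Lemma s0 : sigma 0 = 0.
Proof. by apply/(addrI (sigma 0)); rewrite -sD !addr0. Qed.

Definition Psi (F : Om) : Om :=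
  \sum_(J : {set 'I_n}) omul (omono set0 (sigma (F J))) (prodl eta (enum J)).

Lemma PsiDef F : Psi F = \sum_(J : {set 'I_n}) omul (omono set0 (sigma (F J))) (prodl eta (enum J)).
Proof. by []. Qed.

Lemma PsiD F G : Psi (F + G) = Psi F + Psi G.
Proof.
rewrite /Psi -big_split; apply: eq_bigr => J _.
by rewrite ffunE sD omonoD omulDl.
Qed.

Lemma Psi0 : Psi 0 = 0.
Proof.
rewrite /Psi big1 // => J _; by rewrite ffunE s0 omono0 omul0l.
Qed.

Lemma PsiZ c F : Psi (c *: F) = c *: Psi F.
Proof.
rewrite /Psi scaler_sumr; apply: eq_bigr => J _.
by rewrite ffunE sZ omonoZ omulZl.
Qed.

Lemma Psi_sum I (r : seq I) (P : pred I) (F : I -> Om) :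
  Psi (\sum_(i <- r | P i) F i) = \sum_(i <- r | P i) Psi (F i).
Proof. by apply: (big_morph Psi) => [X Y|]; rewrite ?PsiD ?Psi0. Qed.

Lemma Psi_omono L p : Psi (omono L p) = omul (omono set0 (sigma p)) (prodl eta (enum L)).
Proof.
rewrite /Psi (bigD1 L) //= big1 ?addr0 ?omonoE ?eqxx // => J nJ.
by rewrite omonoE (negbTE nJ) s0 omono0 omul0l.
Qed.

Lemma Psi_poly_mul p Y : Psi (omul (omono set0 p) Y) = omul (omono set0 (sigma p)) (Psi Y).
Proof.
have -> : omul (omono set0 p) Y = omul (omono set0 p) (\sum_J omono J (Y J)) by rewrite -odecomp.
rewrite omul_sumr Psi_sum [in RHS]PsiDef omul_sumr; apply: eq_bigr => J _.
have -> : omul (omono set0 p) (omono J (Y J)) = omono J (p * Y J).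
  by rewrite omono_mul dis0l osgn0l scale1r set0U.
rewrite Psi_omono sM -omono_poly_mul omulA; done.
Qed.

Lemma Psi_theta_mul m X : Psi (omul (theta K m) X) = omul (eta m) (Psi X).
Proof.
have -> : omul (theta K m) X = omul (theta K m) (\sum_J omono J (X J)) by rewrite -odecomp.
rewrite omul_sumr Psi_sum [in RHS]PsiDef omul_sumr; apply: eq_bigr => J _.
rewrite -omulA -omul_poly_comm omulA.
rewrite /theta omono_mul disjoints1 mul1r.
rewrite !enumJ.
case mJ: (m \in J) => /=.
  by rewrite Psi0 (eta_prod_in etaE) ?omul0r // ?sorted_enum ?mem_enum.
rewrite PsiZ Psi_omono (eta_prod_notin etaE) ?sorted_enum ?mem_enum ?mJ //.
by rewrite omulZr osgn1_count enumJ.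
Qed.

Lemma Psi_prodl_mul l Y : Psi (omul (prodl (@theta K n) l) Y) = omul (prodl eta l) (Psi Y).
Proof.
elim: l Y => [|x l IH] Y /=; first by rewrite !omul1l.
by rewrite omulA Psi_theta_mul IH omulA.
Qed.

Lemma PsiM F G : Psi (omul F G) = omul (Psi F) (Psi G).
Proof.
have -> : omul F G = omul (\sum_K omono K (F K)) G by rewrite -odecomp.
have -> : Psi F = Psi (\sum_K omono K (F K)) by rewrite -odecomp.
rewrite omul_suml !Psi_sum omul_suml; apply: eq_bigr => L _.
rewrite {1}omono_prod omulA Psi_poly_mul Psi_prodl_mul Psi_omono omulA; done.
Qed.

Lemma Psi_one : Psi (oone K n) = oone K n.
Proof. by rewrite /oone Psi_omono s1 enum_set0 /= omul1r. Qed.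

Lemma Psi_theta m : Psi (theta K m) = eta m.
Proof.
rewrite /theta Psi_omono s1 enum_set1 prodl_cons -/(oone K n) omul1l.
by rewrite /prodl /= omul1r.
Qed.

Lemma Psi_poly p : Psi (omono set0 p) = omono set0 (sigma p).
Proof. by rewrite Psi_omono enum_set0 /= omul1r. Qed.

Lemma PsiE F L : Psi F L = \sum_(J : {set 'I_n}) sigma (F J) * prodl eta (enum J) L.
Proof. rewrite /Psi sum_ffunE; apply: eq_bigr => J _; by rewrite omul_polyl ffunE. Qed.

End Psi.

Lemma omono_mulE (m : 'I_n) (J L : {set 'I_n}) (a b : MP) :
  omul (omono [set m] a) (omono J b) L =
  if (m \notin J) && (L == m |: J) then osgn K [set m] J *: (a * b) else 0.
Proof.
rewrite omono_mul disjoints1; case: (m \in J) => /=; first by rewrite ffunE.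
by rewrite ffunE omonoE; case: eqP; rewrite ?scaler0.
Qed.

Lemma omul_linE a (Y : Om) L :
  omul (lin a) Y L = \sum_(m in L) osgn K [set m] (L :\ m) *: (a m * Y (L :\ m)).
Proof.
have -> : omul (lin a) Y = omul (lin a) (\sum_J omono J (Y J)) by rewrite -odecomp.
rewrite /lin omul_sum2 sum_ffunE [in RHS]big_mkcond /=; apply: eq_bigr => m _.
rewrite sum_ffunE; under eq_bigr => J _ do rewrite omono_mulE.
case mL: (m \in L).
  rewrite (bigD1 (L :\ m)) //= [X in _ + X]big1 ?addr0.
    by rewrite setD1K // eqxx in_setD1 eqxx.
  move=> J nJ; case: ifP => // /andP[mJ /eqP eL].
  by move: nJ; rewrite eL setU1K // eqxx.
apply: big1 => J _; case: ifP => // /andP[mJ /eqP eL].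
by move: mL; rewrite eL setU11.
Qed.

Definition sumS (L : {set 'I_n}) := (\sum_(i in L) val i)%N.
Definition sumL (l : seq 'I_n) := (\sum_(i <- l) val i)%N.

Lemma sorted_uniqO l : sorted ltO l -> uniq l.
Proof.
apply: sorted_uniq; first by move=> a b c; exact: ltn_trans.
by move=> a; rewrite /ltO ltnn.
Qed.

Lemma sumS_set l : uniq l -> sumS [set x in l] = sumL l.
Proof.
move=> ul; rewrite /sumS /sumL (big_uniq _ ul); apply: eq_bigl => x; by rewrite inE.
Qed.

Section Tri.
Variable A : 'I_n -> 'I_n -> MP.
Variable eta : 'I_n -> Om.
Hypothesis etaE : forall i, eta i = lin (A i).
Hypothesis Atri : forall i m : 'I_n, (m < i)%N -> A i m = 0.

Lemma sum_nz (L : {set 'I_n}) (f : 'I_n -> Om) :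
  \sum_(m in L) f m != 0 -> exists2 m, m \in L & f m != 0.
Proof.
move=> nz; case: (pickP (fun m => (m \in L) && (f m != 0))) => [m /andP[mL fm]|none].
  by exists m.
move: nz; rewrite big1 ?eqxx // => m mL.
by move: (none m); rewrite mL /= => /negbFE/eqP.
Qed.

Lemma sumK_nz (L : {set 'I_n}) (f : 'I_n -> MP) :
  \sum_(m in L) f m != 0 -> exists2 m, m \in L & f m != 0.
Proof.
move=> nz; case: (pickP (fun m => (m \in L) && (f m != 0))) => [m /andP[mL fm]|none].
  by exists m.
move: nz; rewrite big1 ?eqxx // => m mL.
by move: (none m); rewrite mL /= => /negbFE/eqP.
Qed.

Lemma tri l : sorted ltO l -> forall L, prodl eta l L != 0 ->
  [/\ #|L| = size l, (sumL l <= sumS L)%N & (sumS L = sumL l -> L = [set x in l])].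
Proof.
elim: l => [|x l IH] sl L /=.
  rewrite /prodl /= /oone omonoE; case: (L =P set0) => [-> _|_]; last by rewrite eqxx.
  split; rewrite ?cards0 /sumL ?big_nil //; move=> _; apply/setP => y; by rewrite !inE.
have sl' : sorted ltO l by move: sl => /= /path_sorted.
have xmin := sorted_min sl.
rewrite -/(prodl eta (x :: l)) prodl_cons etaE omul_linE => /sumK_nz [m mL].
rewrite scaler_eq0 negb_or => /andP[_ nz].
have nzA : A x m != 0 by apply: contraNneq nz => ->; rewrite mul0r.
have nzY : prodl eta l (L :\ m) != 0 by apply: contraNneq nz => ->; rewrite mulr0.
have xm : (x <= m)%N by rewrite leqNgt; apply: contraNN nzA => h; rewrite Atri.
have [c1 c2 c3] := IH sl' _ nzY.
have cL : #|L| = #|L :\ m|.+1 by rewrite (cardsD1 m L) mL.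
have sL : sumS L = (m + sumS (L :\ m))%N.
  by rewrite /sumS (bigD1 m mL) /=; congr (_ + _)%N; apply: eq_bigl => y; rewrite in_setD1 andbC.
have sxl : sumL (x :: l) = (x + sumL l)%N by rewrite /sumL big_cons.
split.
- by rewrite cL c1.
- rewrite sL sxl; exact: leq_add.
rewrite sL sxl => e.
have emx : nat_of_ord m = nat_of_ord x by lia.
have ed : sumS (L :\ m) = sumL l by lia.
have mx : m = x by apply: val_inj; exact: emx.
have := c3 ed; rewrite mx => eL.
apply/setP => y; rewrite inE; case: (y =P x) => [->|nyx] /=.
  by rewrite -{1}mx mL mem_head.
have : (y \in L :\ x) = (y \in L) by rewrite in_setD1 (introF eqP nyx).
by rewrite eL inE => <-; rewrite inE (introF eqP nyx).
Qed.

Lemma tri_diag l : sorted ltO l -> prodl eta l [set x in l] = \prod_(x <- l) A x x.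
Proof.
elim: l => [|x l IH] sl.
  have -> : [set x in ([::] : seq 'I_n)] = set0 by apply/setP => y; rewrite !inE.
  by rewrite big_nil /prodl /= /oone omonoE eqxx.
have sl' : sorted ltO l by move: sl => /= /path_sorted.
have xmin := sorted_min sl.
have xl : x \notin l by apply/negP => /xmin; rewrite ltnn.
have ul : uniq l := sorted_uniqO sl'.
have eD : [set y in x :: l] :\ x = [set y in l].
  apply/setP => y; rewrite !inE; case: (y =P x) => [->|] //=; by rewrite (negbTE xl).
rewrite prodl_cons etaE omul_linE (bigD1 x) /=; last by rewrite inE mem_head.
rewrite [X in _ + X]big1 ?addr0.
  rewrite eD IH // osgn1_count big_cons.
  have -> : count (fun j => (j \in [set y in l]) && (j < x)%N) (enum 'I_n) = 0%N.
    apply/eqP; rewrite -leqn0 leqNgt -has_count; apply/hasP => -[y _ /andP[]].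
    by rewrite inE => /xmin h1 h2; move: (ltn_trans h1 h2); rewrite ltnn.
  by rewrite expr0 scale1r.
move=> m /andP[mS nmx].
have ml : m \in l by move: mS; rewrite !inE (negbTE nmx).
have xm : (x < m)%N by apply: xmin.
case: (prodl eta l ([set y in x :: l] :\ m) =P 0) => [->|nz]; first by rewrite mulr0 scaler0.
have [_ c2 _] := tri sl' (introN eqP nz).
have := c2; rewrite /sumS.
have sL : sumS [set y in x :: l] = (m + sumS ([set y in x :: l] :\ m))%N.
  by rewrite /sumS (bigD1 m mS) /=; congr (_ + _)%N; apply: eq_bigl => y; rewrite in_setD1 andbC.
have : sumS [set y in x :: l] = (x + sumL l)%N.
  rewrite sumS_set; first by rewrite /sumL big_cons.
  by rewrite /= xl ul.
rewrite sL /sumS => h1 h2; lia.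
Qed.

End Tri.

Lemma IB0 : IB (0 : MP).
Proof. exists [::]; split => //; by rewrite big_nil. Qed.

Lemma IBD (p q : MP) : IB p -> IB q -> IB (p + q).
Proof.
move=> [s1 [h1 e1]] [s2 [h2 e2]]; exists (s1 ++ s2); split.
  move=> t; rewrite mem_cat => /orP[]; [exact: h1 | exact: h2].
by rewrite big_cat e1 e2.
Qed.

Lemma IBM (q p : MP) : IB p -> IB (q * p).
Proof.
move=> [s [h e]]; exists [seq (q * t.1, t.2) | t <- s]; split.
  move=> t /mapP[u us ->] /=; exact: h.
by rewrite big_map e mulr_sumr; apply: eq_bigr => t _; rewrite mulrA.
Qed.

Lemma IBMr (q p : MP) : IB p -> IB (p * q).
Proof. rewrite mulrC; exact: IBM. Qed.

Lemma IBZ c (p : MP) : IB p -> IB (c *: p).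
Proof. rewrite -mul_mpolyC; exact: IBM. Qed.

Lemma IB_sum I (r : seq I) (P : pred I) (f : I -> MP) :
  (forall i, P i -> IB (f i)) -> IB (\sum_(i <- r | P i) f i).
Proof. move=> h; apply: big_ind => //; [exact: IB0 | exact: IBD]. Qed.

Lemma IB_gen (p : MP) : poly_invariant p -> p@_0%MM = 0 -> IB p.
Proof.
move=> hi h0; exists [:: (1, p)]; split; last by rewrite big_seq1 mul1r.
by move=> t; rewrite inE => /eqP ->.
Qed.

Definition inI (F : Om) := forall L, IB (F L).

Lemma inI_mulr (F G : Om) : inI G -> inI (omul F G).
Proof.
move=> h L; rewrite omulE; apply: IB_sum => I _; apply: IB_sum => J _.
apply: IBZ; apply: IBM; exact: h.
Qed.

Lemma inI_mull (F G : Om) : inI F -> inI (omul F G).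
Proof.
move=> h L; rewrite omulE; apply: IB_sum => I _; apply: IB_sum => J _.
apply: IBZ; apply: IBMr; exact: h.
Qed.

Lemma inI_sum I (r : seq I) (f : I -> Om) :
  (forall i, inI (f i)) -> inI (\sum_(i <- r) f i).
Proof. move=> h L; rewrite sum_ffunE; apply: IB_sum => i _; exact: h. Qed.

Lemma inI_Psi (eta : 'I_n -> Om) (F : Om) : inI F -> inI (Psi id eta F).
Proof.
move=> h L; rewrite PsiE; apply: IB_sum => J _; apply: IBMr; exact: h.
Qed.

Definition Zc (p : MP) := p@_0%MM = 0.

Lemma mc0M (p q : MP) : (p * q)@_0%MM = p@_0%MM * q@_0%MM.
Proof. exact: (mcoeff0_is_multiplicative n K).1. Qed.

Lemma ZcMl (p q : MP) : Zc p -> Zc (p * q).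
Proof. by rewrite /Zc mc0M => ->; rewrite mul0r. Qed.

Lemma ZcMr (p q : MP) : Zc q -> Zc (p * q).
Proof. by rewrite /Zc mc0M => ->; rewrite mulr0. Qed.

Lemma ZcZ c (p : MP) : Zc p -> Zc (c *: p).
Proof. by rewrite /Zc mcoeffZ => ->; rewrite mulr0. Qed.

Lemma Zc_sum I (r : seq I) (P : pred I) (f : I -> MP) :
  (forall i, P i -> Zc (f i)) -> Zc (\sum_(i <- r | P i) f i).
Proof.
move=> h; rewrite /Zc raddf_sum /=; apply: big1 => i /h; by [].
Qed.

Lemma ZcX (i : 'I_n) k : Zc ('X_i ^+ k.+1).
Proof. rewrite exprS; apply: ZcMl; by rewrite /Zc mcoeffX mnm1_eq0. Qed.

Lemma prodl_Zc (A : 'I_n -> 'I_n -> MP) l x :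
  (forall m, Zc (A x m)) -> forall L, Zc (prodl (fun i => lin (A i)) (x :: l) L).
Proof.
move=> h L; rewrite prodl_cons omul_linE; apply: Zc_sum => m _; apply: ZcZ.
apply: ZcMl; exact: h.
Qed.

Definition ohom (M : Om -> Om) :=
  [/\ forall F G, M (F + G) = M F + M G, M 0 = 0,
      forall F G, M (omul F G) = omul (M F) (M G) & M (oone K n) = oone K n].

Lemma ohom_Psi sigma A eta :
  (forall p q, sigma (p + q) = sigma p + sigma q) ->
  (forall p q, sigma (p * q) = sigma p * sigma q) -> sigma 1 = 1 ->
  (forall (c : K) p, sigma (c *: p) = c *: sigma p) ->
  (forall i, eta i = lin (A i)) -> ohom (Psi sigma eta).
Proof.
move=> sD sM s1 sZ etaE; split.
- exact: PsiD sD eta.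
- exact: Psi0 sD eta.
- exact: (PsiM sD sM sZ etaE).
- exact: Psi_one sD s1 eta.
Qed.

Lemma idD : forall p q : MP, id (p + q) = id p + id q. Proof. by []. Qed.
Lemma idM : forall p q : MP, id (p * q) = id p * id q. Proof. by []. Qed.
Lemma id1 : id (1 : MP) = 1. Proof. by []. Qed.
Lemma idZ : forall (c : K) (p : MP), id (c *: p) = c *: id p. Proof. by []. Qed.
Lemma pactD pi : forall p q : MP, pact pi (p + q) = pact pi p + pact pi q.
Proof. move=> p q; exact: comp_mpolyD. Qed.
Lemma pactM pi : forall p q : MP, pact pi (p * q) = pact pi p * pact pi q.
Proof. move=> p q; exact: rmorphM. Qed.
Lemma pact1 pi : pact pi (1 : MP) = 1.
Proof. exact: comp_mpoly1. Qed.
Lemma pactZ pi : forall (c : K) (p : MP), pact pi (c *: p) = c *: pact pi p.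
Proof. move=> c p; exact: comp_mpolyZ. Qed.

Lemma ohom_comp M1 M2 : ohom M1 -> ohom M2 -> ohom (fun F => M1 (M2 F)).
Proof.
move=> [a1 b1 c1 d1] [a2 b2 c2 d2]; split => [F G|| F G |].
- by rewrite a2 a1.
- by rewrite b2 b1.
- by rewrite c2 c1.
- by rewrite d2 d1.
Qed.

Lemma ohom_sum M I (r : seq I) (f : I -> Om) : ohom M ->
  M (\sum_(i <- r) f i) = \sum_(i <- r) M (f i).
Proof. move=> [a b _ _]; exact: (big_morph M a b). Qed.

Lemma ohom_prodl M l : ohom M -> M (prodl (@theta K n) l) = prodl (fun i => M (theta K i)) l.
Proof.
move=> hM; elim: l => [|x l IH]; first by case: hM.
by rewrite !prodl_cons; case: hM => _ _ -> _; rewrite IH.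
Qed.

Lemma ohom_expand M F : ohom M ->
  M F = \sum_(L : {set 'I_n}) omul (M (omono set0 (F L))) (prodl (fun i => M (theta K i)) (enum L)).
Proof.
move=> hM; have -> : M F = M (\sum_L omono L (F L)) by rewrite -odecomp.
rewrite ohom_sum //; apply: eq_bigr => L _.
by rewrite omono_prod; case: (hM) => _ _ -> _; rewrite ohom_prodl.
Qed.

Lemma prodl_ext (f g : 'I_n -> Om) l : f =1 g -> prodl f l = prodl g l.
Proof. by move=> e; rewrite /prodl (eq_map e). Qed.

Lemma ohom_eq M1 M2 : ohom M1 -> ohom M2 ->
  (forall p, M1 (omono set0 p) = M2 (omono set0 p)) ->
  (forall i, M1 (theta K i) = M2 (theta K i)) -> forall F, M1 F = M2 F.
Proof.
move=> h1 h2 ep et F; rewrite (ohom_expand F h1) (ohom_expand F h2).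
apply: eq_bigr => L _; rewrite ep; congr omul; exact: prodl_ext.
Qed.

Definition Pm (i a : 'I_n) : MP := 'X_i ^+ (2 * a).+1.
Definition etaP (i : 'I_n) := lin (Pm i).
Definition PsiP := Psi id etaP.
Definition Pi (pi : signed_perm n) := Psi (pact pi) (@theta K n).
Definition etapi (pi : signed_perm n) (j : 'I_n) : Om :=
  sgn_of K (pi.2 j) *: theta K (pi.1 j).

Lemma oactE pi F : oact pi F = Psi (pact pi) (etapi pi) F.
Proof. by []. Qed.

Lemma etapiE pi j : etapi pi j =
  lin (fun m => if m == pi.1 j then sgn_of K (pi.2 j) *: (1 : MP) else 0).
Proof.
rewrite /etapi theta_lin /lin scaler_sumr; apply: eq_bigr => m _.
by rewrite -omonoZ; case: eqP; rewrite ?scaler0.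
Qed.

Lemma ohom_PsiP : ohom PsiP.
Proof. by apply: (@ohom_Psi id Pm); [exact: idD|exact: idM|exact: id1|exact: idZ|]. Qed.

Lemma ohom_Pi pi : ohom (Pi pi).
Proof.
apply: (@ohom_Psi _ (fun i m => if m == i then 1 else 0)).
- exact: pactD.
- exact: pactM.
- exact: pact1.
- exact: pactZ.
- exact: theta_lin.
Qed.

Lemma ohom_oact pi : ohom (Psi (pact pi) (etapi pi)).
Proof.
apply: (@ohom_Psi _ (fun j m => if m == pi.1 j then sgn_of K (pi.2 j) *: (1 : MP) else 0)).
- exact: pactD.
- exact: pactM.
- exact: pact1.
- exact: pactZ.
- exact: etapiE.
Qed.

Lemma Psi_lin sigma (a : 'I_n -> MP) :
  (forall p q, sigma (p + q) = sigma p + sigma q) ->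
  Psi sigma (@theta K n) (lin a) = lin (fun m => sigma (a m)).
Proof.
move=> sD; rewrite /lin (Psi_sum sD); apply: eq_bigr => m _.
by rewrite (Psi_omono sD) -omono_prod.
Qed.

Lemma pactX pi (i : 'I_n) : pact pi ('X_i : MP) = sgn_of K (pi.2 i) *: 'X_(pi.1 i).
Proof. by rewrite /pact comp_mpolyXU -(tnth_nth 0) tnth_mktuple. Qed.

Lemma sgn_odd b a : sgn_of K b ^+ (2 * a).+1 = sgn_of K b.
Proof.
case: b; rewrite /sgn_of ?expr0 ?expr1n // expr1.
by rewrite exprS exprM sqrrN !expr1n mulr1.
Qed.

Lemma equivariance pi F : PsiP (oact pi F) = Pi pi (PsiP F).
Proof.
rewrite oactE.
apply: (@ohom_eq (fun F => PsiP (Psi (pact pi) (etapi pi) F)) (fun F => Pi pi (PsiP F))).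
- apply: ohom_comp; [exact: ohom_PsiP | exact: ohom_oact].
- apply: ohom_comp; [exact: ohom_Pi | exact: ohom_PsiP].
- by move=> p; rewrite /PsiP /Pi (Psi_poly (pactD pi)) !(Psi_poly idD) (Psi_poly (pactD pi)).
move=> i; rewrite /PsiP /Pi (Psi_theta (pactD pi) (pact1 pi)) (Psi_theta idD id1).
rewrite /etapi (PsiZ idZ) (Psi_theta idD id1) /etaP (Psi_lin _ (pactD pi)).
rewrite /lin scaler_sumr; apply: eq_bigr => a _.
have pX : forall (p : MP) k, pact pi (p ^+ k) = (pact pi p) ^+ k.
  by move=> p k; rewrite /pact rmorphXn.
by rewrite -omonoZ /Pm pX pactX exprZn sgn_odd.
Qed.

Lemma Pi_E pi (G : Om) L : Pi pi G L = pact pi (G L).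
Proof.
rewrite /Pi PsiE (bigD1 L) //= big1 ?addr0.
  have := omono_prod L 1; rewrite -/(oone K n) omul1l => <-.
  by rewrite omonoE eqxx mulr1.
move=> J nJ; have := omono_prod J 1; rewrite -/(oone K n) omul1l => <-.
by rewrite omonoE eq_sym (negbTE nJ) mulr0.
Qed.

Lemma inI_PsiP_inv (h : Om) : omega_invariant h -> (h set0)@_0%MM = 0 -> inI (PsiP h).
Proof.
move=> hinv h0 L; apply: IB_gen.
  move=> pi; have := equivariance pi h; rewrite (hinv pi) => e.
  by rewrite {2}e Pi_E.
rewrite /PsiP PsiE; apply: Zc_sum => J _ /=.
case eJ: (enum J) => [|x l].
  have -> : J = set0 by rewrite -(set_enum J) eJ; apply/setP => y; rewrite !inE.
  exact: ZcMl.
apply: ZcMr; apply: prodl_Zc => m; exact: ZcX.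
Qed.

Definition lst (m : 'I_n) := [seq i' : 'I_n <- enum 'I_n | (m < i')%N].
Definition Qp (m : 'I_n) : {poly MP} := \prod_(i' <- lst m) ('X - ('X_i' ^+ 2)%:P).
Definition Cm (a m : 'I_n) : MP := (Qp m)`_a.
Definition etaC (a : 'I_n) := lin (Cm a).
Definition PsiC := Psi id etaC.
Definition Am (i m : 'I_n) : MP :=
  'X_i * \prod_(i' : 'I_n | (m < i')%N) ('X_i ^+ 2 - 'X_i' ^+ 2).
Definition etaA (i : 'I_n) := lin (Am i).
Definition Phi (F : Om) := PsiC (PsiP F).

Lemma prod_lst (m : 'I_n) (F : 'I_n -> MP) :
  \prod_(i' <- lst m) F i' = \prod_(i' : 'I_n | (m < i')%N) F i'.
Proof. rewrite /lst big_filter. rewrite enumT. unlock. done. Qed.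

Lemma size_Qp m : (size (Qp m) <= n)%N.
Proof.
rewrite /Qp size_prod_XsubC /lst size_filter.
have h1 := @count_predC 'I_n (fun i' : 'I_n => (m < i')%N) (enum 'I_n).
have h2 : (0 < count (predC (fun i' : 'I_n => (m < i')%N)) (enum 'I_n))%N.
  rewrite -has_count; apply/hasP; exists m; by rewrite ?mem_enum //= ltnn.
rewrite size_enum_ord in h1; lia.
Qed.

Lemma Am_sum (i m : 'I_n) : \sum_(a < n) Pm i a * Cm a m = Am i m.
Proof.
have e : (Qp m).[('X_i : MP) ^+ 2] = \prod_(i' : 'I_n | (m < i')%N) ('X_i ^+ 2 - 'X_i' ^+ 2).
  rewrite /Qp horner_prod -prod_lst; apply: eq_bigr => k _; by rewrite hornerXsubC.
rewrite /Am -e (horner_coef_wide _ (size_Qp m)) mulr_sumr; apply: eq_bigr => a _.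
by rewrite /Pm /Cm exprS -exprM -mulrA [X in _ * X]mulrC.
Qed.

Lemma Atri (i m : 'I_n) : (m < i)%N -> Am i m = 0.
Proof. by move=> h; rewrite /Am (bigD1 i) //= subrr mul0r mulr0. Qed.

Lemma lin_sum (f : 'I_n -> 'I_n -> MP) :
  \sum_(a < n) lin (f a) = lin (fun m => \sum_(a < n) f a m).
Proof.
rewrite /lin exchange_big; apply: eq_bigr => m _; by rewrite omono_sum.
Qed.

Lemma poly_lin (p : MP) (c : 'I_n -> MP) :
  omul (omono set0 p) (lin c) = lin (fun m => p * c m).
Proof.
rewrite /lin omul_sumr; apply: eq_bigr => m _.
by rewrite omono_mul dis0l osgn0l set0U scale1r.
Qed.

Lemma PsiC_etaP i : PsiC (etaP i) = etaA i.
Proof.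
rewrite /PsiC /etaP {1}/lin (Psi_sum idD).
have -> : \sum_(m < n) Psi id etaC (omono [set m] (Pm i m)) = \sum_(a < n) lin (fun m => Pm i a * Cm a m).
  apply: eq_bigr => a _; rewrite (Psi_omono idD) enum_set1 prodl_cons /prodl /= omul1r.
  exact: poly_lin.
by rewrite lin_sum /etaA /lin; apply: eq_bigr => m _; rewrite Am_sum.
Qed.

Lemma ohom_PsiC : ohom PsiC.
Proof. by apply: (@ohom_Psi id Cm); [exact: idD|exact: idM|exact: id1|exact: idZ|]. Qed.

Lemma ohom_Phi : ohom Phi.
Proof. apply: ohom_comp; [exact: ohom_PsiC | exact: ohom_PsiP]. Qed.

Lemma Phi_omono (L : {set 'I_n}) p : Phi (omono L p) = omul (omono set0 p) (prodl etaA (enum L)).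
Proof.
rewrite omono_prod; case: (ohom_Phi) => _ _ hM _; rewrite hM ohom_prodl; last exact: ohom_Phi.
rewrite /Phi /PsiP /PsiC !(Psi_poly idD); congr omul; apply: prodl_ext => i.
by rewrite (Psi_theta idD id1); exact: PsiC_etaP.
Qed.

Lemma PhiZ c F : Phi (c *: F) = c *: Phi F.
Proof. by rewrite /Phi /PsiP /PsiC !(PsiZ idZ). Qed.

Lemma inI_sum_seq (I : eqType) (r : seq I) (f : I -> Om) :
  (forall i, i \in r -> inI (f i)) -> inI (\sum_(i <- r) f i).
Proof. move=> h L; rewrite sum_ffunE big_seq; apply: IB_sum => i /h; by []. Qed.

Lemma Phi_SIB F : SIB F -> inI (Phi F).
Proof.
move=> [s [hs ->]]; rewrite ohom_sum; last exact: ohom_Phi.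
apply: inI_sum_seq => t ts; case: (ohom_Phi) => _ _ hM _; rewrite !hM.
apply: inI_mull; apply: inI_mulr; rewrite /Phi /PsiC; apply: inI_Psi.
by have [h1 h2] := hs t ts; apply: inI_PsiP_inv.
Qed.

Lemma sorted_enumS (L : {set 'I_n}) : sorted ltO (enum L).
Proof.
rewrite enumJ; apply: sorted_filter; last exact: sorted_enum.
by move=> a b c; exact: ltn_trans.
Qed.

Lemma sumL_enum (L : {set 'I_n}) : sumL (enum L) = sumS L.
Proof. by rewrite /sumL big_enum. Qed.

Lemma prodA_diag (J : {set 'I_n}) : prodl etaA (enum J) J = fJ K J.
Proof.
have := tri_diag (A := Am) (eta := etaA) (fun i => erefl) (@Atri) (sorted_enumS J).
by rewrite set_enum => ->; rewrite big_enum.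
Qed.

Theorem main_gen (B : {set 'I_n} -> MP -> Prop) :
  (forall J : {set 'I_n}, quot_basis (colon (@IB K n) (fJ K J)) (B J)) ->
  forall (s : seq ({set 'I_n} * MP)) (c : {set 'I_n} * MP -> K),
    uniq s -> (forall t, t \in s -> B t.1 t.2) ->
    SIB (\sum_(t <- s) c t *: omono t.1 t.2) ->
    forall t, t \in s -> c t = 0.
Proof.
move=> hQ s c us hB hS.
have hI := Phi_SIB hS.
have key : forall J, IB (\sum_(t <- s) c t *: (t.2 * prodl etaA (enum t.1) J)).
  move=> J; have := hI J; rewrite ohom_sum; last exact: ohom_Phi.
  rewrite sum_ffunE; congr IB; apply: eq_bigr => t _.
  by rewrite PhiZ Phi_omono ffunE omul_polyl ffunE.
move=> t0 t0s; move: {2}(sumS t0.1) (erefl (sumS t0.1)) => N eN.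
elim/ltn_ind: N t0 t0s eN => N IH t0 t0s eN.
set J := t0.1.
have hJ : IB ((\sum_(t <- s | t.1 == J) c t *: t.2) * fJ K J).
  have := key J; rewrite (bigID (fun t => t.1 == J)) /=.
  rewrite [X in _ + X]big_seq_cond [X in _ + X]big1 ?addr0; last first.
    move=> t /andP[ts ne]; case: (prodl etaA (enum t.1) J =P 0) => [->|nz].
      by rewrite mulr0 scaler0.
    have [_ c2 c3] := tri (fun i => erefl) (@Atri) (sorted_enumS t.1) (introN eqP nz).
    rewrite sumL_enum in c2 c3.
    have lt : (sumS t.1 < N)%N.
      rewrite -eN -/J ltn_neqAle c2 andbT; apply/eqP => e.
      by move: ne; rewrite (c3 (esym e)) set_enum eqxx.
    by rewrite (IH _ lt t ts erefl) scale0r.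
  rewrite mulr_suml; congr IB; apply: eq_bigr => t /eqP ->.
  by rewrite prodA_diag scalerAl.
have [hind _] := hQ J.
have eq2 : forall t, t \in [seq t <- s | t.1 == J] -> t = (J, t.2).
  by move=> t; rewrite mem_filter => /andP[/eqP <- _]; case: t.
have e0 : c t0 = c (J, t0.2) by rewrite /J -surjective_pairing.
rewrite e0; apply: (hind [seq t.2 | t <- s & t.1 == J] (fun p => c (J, p))).
- rewrite map_inj_in_uniq ?filter_uniq // => t u tf uf e.
  by rewrite (eq2 t tf) (eq2 u uf) e.
- move=> p /mapP[t tf ->]; have := tf; rewrite mem_filter => /andP[/eqP <- ts].
  exact: hB.
- rewrite /colon big_map big_filter mulrC.
  congr IB: hJ; congr (_ * _); apply: eq_bigr => t /eqP e.
  by rewrite -e -surjective_pairing.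
- by apply/mapP; exists t0; rewrite // mem_filter eqxx t0s.
Qed.

End OmegaAlg.

Theorem mainTheorem11 (R : realType) (n : nat)
  (B : {set 'I_n} -> {mpoly R[i][n]} -> Prop) :
  (forall (J : {set 'I_n}) (p : {mpoly R[i][n]}),
      B J p -> exists d : nat, p \is d.-homog) ->
  (forall J : {set 'I_n}, quot_basis (colon (@IB R[i] n) (fJ R[i] J)) (B J)) ->
  forall (s : seq ({set 'I_n} * {mpoly R[i][n]}))
         (c : {set 'I_n} * {mpoly R[i][n]} -> R[i]),
    uniq s -> (forall t, t \in s -> B t.1 t.2) ->
    SIB (\sum_(t <- s) c t *: omono t.1 t.2) ->
    forall t, t \in s -> c t = 0.
Proof.
move=> _ hQ; exact: (@main_gen R[i] n B hQ).
Qed.
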